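(* Let $g\ge 1$. The complex free-nilpotent Lie algebra $N(2,g)$ of nilpotency class $2$ on $g$ generators admits a periodic derivation if and only if $g\le 3$.
   Context: $N(c,g)$ denotes the free-nilpotent complex Lie algebra of nilpotency class $c$ on $g$ generators (the free Lie algebra on $g$ generators modulo the $(c+1)$-st term of its lower central series). A derivation $D$ of a Lie algebra is called periodic if there is an integer $m\ge 1$ with $D^m=\mathrm{id}$. *)

(* Defs.v *)
From HB Require Import structures.
From mathcomp Require Import all_boot all_order all_algebra.
From mathcomp Require Import reals complex.
Set Implicit Arguments. Unset Strict Implicit. Unset Printing Implicit Defensive.
Import Order.TTheory GRing.Theory Num.Theory.
Local Open Scope ring_scope.

(* Index set of the basis f_{ij} (i < j) of Lambda^2 V, V = C^g. *)
Definition pairs (g : nat) := {p : 'I_g * 'I_g | (p.1 < p.2)%N}.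

(* Underlying vector space of N(2,g) = V (+) Lambda^2 V, with basis
   e_1..e_g (generators) and f_{ij} = [e_i, e_j] (i < j). *)
Notation N2 K g := {ffun ('I_g + pairs g)%type -> K}.

(* Coordinates: inl i is the coefficient of e_i, inr (i,j) that of f_{ij}.
   Lie bracket of N(2,g): [(v,a),(w,b)] = (0, v /\ w), i.e.
   [x,y]_{f_ij} = x_i y_j - x_j y_i, [x,y]_{e_i} = 0. *)
Definition N2_bracket (K : fieldType) (g : nat) (x y : N2 K g) : N2 K g :=
  [ffun k => match k with
             | inl _ => 0
             | inr p => x (inl (sval p).1) * y (inl (sval p).2)
                        - x (inl (sval p).2) * y (inl (sval p).1)
             end].

Definition is_derivation (K : fieldType) (g : nat) (D : N2 K g -> N2 K g) : Prop :=
  (forall x y : N2 K g, D (x + y) = D x + D y) /\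
  (forall (a : K) (x : N2 K g),
      D [ffun k => a * x k] = [ffun k => a * D x k]) /\
  (forall x y : N2 K g, D (N2_bracket x y) = N2_bracket (D x) y + N2_bracket x (D y)).

Definition is_periodic (T : Type) (D : T -> T) : Prop :=
  exists m : nat, (1 <= m)%N /\ forall x, iter m D x = x.

(* Main.v *)
Require Import Defs.
From mathcomp Require Import all_boot all_order all_algebra.
From mathcomp Require Import reals complex.
From mathcomp Require Import separable ring.
Set Implicit Arguments. Unset Strict Implicit. Unset Printing Implicit Defensive.
Import Order.TTheory GRing.Theory Num.Theory.
Local Open Scope ring_scope.

Section Alg.
Variable K : numClosedFieldType.

Lemma unit_conj (x : K) m : (0 < m)%N -> x ^+ m = 1 -> x * x^* = 1.
Proof.
move=> m0 hx; have : `|x| ^+ m == 1 by rewrite -normrX hx normr1.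
rewrite pexpr_eq1 // => /eqP h1; by rewrite -normCK h1 expr1n.
Qed.

Lemma cube_rel (a b : K) m : (0 < m)%N -> a ^+ m = 1 -> b ^+ m = 1 ->
  (a + b) ^+ m = 1 -> a ^+ 2 + a * b + b ^+ 2 = 0.
Proof.
move=> m0 ha hb hab.
have h1 := unit_conj m0 ha; have h2 := unit_conj m0 hb.
have h3 := unit_conj m0 hab; rewrite rmorphD /= in h3.
have -> : a ^+ 2 + a * b + b ^+ 2 =
   a * b * ((a + b) * (a^* + b^*) - a * a^* - b * b^* + 1)
   + a ^+ 2 * (1 - b * b^*) + b ^+ 2 * (1 - a * a^*) by ring.
by rewrite h1 h2 h3 !subrr; ring.
Qed.

Definition Q (x y : K) := x ^+ 2 + x * y + y ^+ 2.

Lemma Q_diag (y : K) : y != 0 -> Q y y != 0.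
Proof.
move=> y0; have -> : Q y y = 3%:R * y ^+ 2 by rewrite /Q; ring.
by rewrite mulf_neq0 ?pnatr_eq0 ?expf_neq0.
Qed.

Lemma Q_sym (x y : K) : Q x y = Q y x.
Proof. rewrite /Q; ring. Qed.

Lemma Q_three (a y z : K) : Q a y = 0 -> Q a z = 0 -> Q y z = 0 -> y != 0 ->
  a + y + z = 0.
Proof.
move=> hy hz hyz y0.
have : (y - z) * (a + y + z) = 0.
  have -> : (y - z) * (a + y + z) = Q a y - Q a z by rewrite /Q; ring.
  by rewrite hy hz subrr.
move/eqP; rewrite mulf_eq0 subr_eq0 => /orP[/eqP eyz|/eqP //].
by move: hyz; rewrite -eyz => /eqP; rewrite (negbTE (Q_diag y0)).
Qed.

Lemma four_false (a b c d : K) : b != 0 -> c != 0 ->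
  Q a b = 0 -> Q a c = 0 -> Q a d = 0 -> Q b c = 0 -> Q b d = 0 -> Q c d = 0 ->
  False.
Proof.
move=> b0 c0 hab hac had hbc hbd hcd.
have e1 := Q_three hab hac hbc b0.
have e2 := Q_three hab had hbd b0.
have ecd : c = d.
  apply/eqP; rewrite -subr_eq0.
  have -> : c - d = (a + b + c) - (a + b + d) by ring.
  by rewrite e1 e2 subrr.
by move: hcd; rewrite -ecd => /eqP; rewrite (negbTE (Q_diag c0)).
Qed.

Lemma omega_ex : exists w : K, w ^+ 2 + w + 1 = 0.
Proof.
exists ((-1 + 'i * sqrtC 3%:R) / 2%:R).
have h2 : (2%:R : K) != 0 by rewrite pnatr_eq0.
have -> : ((-1 + 'i * sqrtC 3%:R) / 2%:R) ^+ 2 + (-1 + 'i * sqrtC 3%:R) / 2%:R + 1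
   = ('i ^+ 2 * (sqrtC 3%:R) ^+ 2 + 3%:R) / 4%:R :> K.
  by field.
by rewrite sqrCi sqrtCK; apply/eqP; rewrite mulf_eq0; apply/orP; left; apply/eqP; ring.
Qed.

End Alg.


Section Constr.
Variable K : numClosedFieldType.
Variable g : nat.
Hypothesis hg : (g <= 3)%N.
Variable w : K.
Hypothesis hw : w ^+ 2 + w + 1 = 0.

Definition coef (k : ('I_g + pairs g)%type) : K :=
  match k with inl i => w ^+ i | inr p => w ^+ (sval p).1 + w ^+ (sval p).2 end.

Definition Dc (x : N2 K g) : N2 K g := [ffun k => coef k * x k].

Lemma w3 : w ^+ 3 = 1.
Proof.
apply/eqP; rewrite -subr_eq0.
have -> : w ^+ 3 - 1 = (w - 1) * (w ^+ 2 + w + 1) by ring.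
by rewrite hw mulr0.
Qed.

Lemma pow6 (a : K) (k : nat) : a = - w ^+ k -> a ^+ 6 = 1.
Proof.
move=> ->; have -> : (- w ^+ k) ^+ 6 = (w ^+ k) ^+ 6 by ring.
rewrite -exprM mulnC exprM; have -> : w ^+ 6 = (w ^+ 3) ^+ 2 by ring.
by rewrite w3 !expr1n.
Qed.

Lemma coef6 k : coef k ^+ 6 = 1.
Proof.
case: k => [i|[[i j] /= hij]] /=.
  rewrite -exprM mulnC exprM; have -> : w ^+ 6 = (w ^+ 3) ^+ 2 by ring.
  by rewrite w3 !expr1n.
have hj : (j < 3)%N by apply: leq_trans (ltn_ord j) hg.
move: hij hj; case: (nat_of_ord i) => [|[|[|i']]]; case: (nat_of_ord j) => [|[|[|j']]] //= _ _.
- apply: (@pow6 _ 2); apply/eqP; rewrite -subr_eq0; apply/eqP; rewrite -hw; ring.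
- apply: (@pow6 _ 1); apply/eqP; rewrite -subr_eq0; apply/eqP; rewrite -hw; ring.
- apply: (@pow6 _ 0); apply/eqP; rewrite -subr_eq0; apply/eqP; rewrite -hw; ring.
Qed.

Lemma Dc_der : is_derivation Dc.
Proof.
split; [|split].
- by move=> x y; apply/ffunP => k; rewrite !ffunE mulrDr.
- by move=> a x; apply/ffunP => k; rewrite !ffunE mulrCA.
- move=> x y; apply/ffunP => [[i|p]]; rewrite !ffunE /=; first by rewrite mulr0 addr0.
  set a := w ^+ _; set b := w ^+ _; ring.
Qed.

Lemma Dc_iter n x : iter n Dc x = [ffun k => coef k ^+ n * x k].
Proof.
elim: n => [|n IH]; first by apply/ffunP => k; rewrite ffunE mul1r.
by rewrite iterS IH; apply/ffunP => k; rewrite !ffunE mulrA -exprS.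
Qed.

Lemma Dc_per : is_periodic Dc.
Proof.
exists 6%N; split => // x; rewrite Dc_iter; apply/ffunP => k.
by rewrite ffunE coef6 mul1r.
Qed.

End Constr.


Lemma ite0 (K : fieldType) (a b : bool) (c : K) : ~~ (a && b) ->
  (if a then c else 0) * (if b then 1 else 0) = 0.
Proof. by case: a; case: b => //= _; rewrite ?mulr0 ?mul0r. Qed.

Section Der.
Variable K : numClosedFieldType.
Variable n : nat.
Local Notation g := n.+1.
Variable D : N2 K g -> N2 K g.
Hypothesis hD : is_derivation D.

Lemma ffD (f h : N2 K g) k : (f + h) k = f k + h k.
Proof. by rewrite ffunE. Qed.
Lemma ffB (f h : N2 K g) k : (f - h) k = f k - h k.
Proof. by rewrite !ffunE. Qed.

Definition embv (v : 'rV[K]_g) : N2 K g :=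
  [ffun k => if k is inl j then v 0 j else 0].
Definition prv (x : N2 K g) : 'rV[K]_g := \row_j x (inl j).
Definition Amx : 'M[K]_g := \matrix_(i, j) D (embv (delta_mx 0 i)) (inl j).

Lemma D0 : D 0 = 0.
Proof.
have h := hD.1 0 0; rewrite addr0 in h.
by apply: (addrI (D 0)); rewrite -h addr0.
Qed.

Lemma Dsum (I : finType) (F : I -> N2 K g) : D (\sum_i F i) = \sum_i D (F i).
Proof. exact: (big_morph D hD.1 D0). Qed.

Lemma embv_delta c (a b : 'I_g) :
  embv (c *: delta_mx 0 a) (inl b) = if b == a then c else 0.
Proof. by rewrite ffunE !mxE eqxx /=; case: (b == a); rewrite ?mulr1 ?mulr0. Qed.

Lemma embv_delta1 (a b : 'I_g) :
  embv (delta_mx 0 a) (inl b) = if b == a then 1 else 0.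
Proof. by rewrite -[delta_mx _ _]scale1r embv_delta. Qed.

Lemma pair_not (p q : pairs g) :
  ~~ (((sval q).2 == (sval p).1) && ((sval q).1 == (sval p).2)).
Proof.
apply/andP => -[/eqP e1 /eqP e2].
have hp := svalP p; have hq := svalP q; rewrite /= -e1 -e2 in hp.
by have := ltn_trans hp hq; rewrite ltnn.
Qed.

Lemma lam_part (y : N2 K g) : (forall j, y (inl j) = 0) -> forall j, D y (inl j) = 0.
Proof.
move=> hy j.
have -> : y = \sum_(p : pairs g) N2_bracket
     (embv (y (inr p) *: delta_mx 0 (sval p).1)) (embv (delta_mx 0 (sval p).2)).
  apply/ffunP => [[i|q]]; rewrite sum_ffunE.
    by rewrite hy big1 // => p _; rewrite ffunE.
  rewrite (bigD1 q) //= big1 ?addr0.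
    by rewrite ffunE !embv_delta !embv_delta1 !eqxx mulr1 ite0 ?subr0 // pair_not.
  move=> p hpq; rewrite ffunE !embv_delta !embv_delta1 ite0 ?ite0 ?subr0 ?pair_not //.
  apply/andP => -[/eqP e1 /eqP e2]; move/eqP: hpq; apply; apply: val_inj.
  by rewrite /= [sval q]surjective_pairing [sval p]surjective_pairing e1 e2.
rewrite Dsum sum_ffunE big1 // => p _.
by rewrite hD.2.2 ffD !ffunE addr0.
Qed.

Lemma prv_embv v : prv (embv v) = v.
Proof. by apply/rowP => j; rewrite !mxE ffunE. Qed.

Lemma embv_sum v :
  embv v = \sum_i [ffun k => v 0 i * embv (delta_mx 0 i) k].
Proof.
apply/ffunP => [[j|q]]; rewrite sum_ffunE ffunE.
  rewrite (bigD1 j) //= big1 ?addr0.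
    by rewrite ffunE embv_delta1 eqxx mulr1.
  by move=> i hij; rewrite ffunE embv_delta1 eq_sym (negbTE hij) mulr0.
by rewrite big1 // => i _; rewrite !ffunE mulr0.
Qed.

Lemma Dpr x : prv (D x) = prv x *m Amx.
Proof.
have ex : x = embv (prv x) + (x - embv (prv x)) by rewrite addrC subrK.
have hy : forall j, (x - embv (prv x)) (inl j) = 0.
  by move=> j; rewrite ffB ffunE mxE subrr.
apply/rowP => j; rewrite mxE {1}ex hD.1 ffD (lam_part hy) addr0.
rewrite embv_sum Dsum sum_ffunE mxE; apply: eq_bigr => i _.
by rewrite hD.2.1 ffunE !mxE.
Qed.

Lemma Dpr_iter k x : prv (iter k D x) = prv x *m Amx ^+ k.
Proof.
elim: k => [|k IH]; first by rewrite expr0 mulmx1.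
by rewrite iterS Dpr IH exprSr mulmxA.
Qed.

Lemma Apow m : (forall x, iter m D x = x) -> Amx ^+ m = 1.
Proof.
move=> hm; apply/row_matrixP => i; rewrite !rowE.
have := Dpr_iter m (embv (delta_mx 0 i)).
by rewrite hm prv_embv mulmx1 => h; rewrite -h.
Qed.


Lemma Dv_eig (v : 'rV[K]_g) l : v *m Amx = l *: v -> forall j, D (embv v) (inl j) = l * v 0 j.
Proof.
move=> h j; have := congr1 (fun r : 'rV_g => r 0 j) (Dpr (embv v)).
rewrite /= prv_embv h !mxE => E; exact: E.
Qed.

Lemma br_D (v w : 'rV[K]_g) l u : v *m Amx = l *: v -> w *m Amx = u *: w ->
  D (N2_bracket (embv v) (embv w)) =
  [ffun k => (l + u) * N2_bracket (embv v) (embv w) k].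
Proof.
move=> hv hw; rewrite hD.2.2; apply/ffunP => -[j|p].
  by rewrite ffD !ffunE mulr0 addr0.
rewrite ffD !ffunE !(Dv_eig hv) !(Dv_eig hw); ring.
Qed.

Lemma br_iter (v w : 'rV[K]_g) l u k : v *m Amx = l *: v -> w *m Amx = u *: w ->
  iter k D (N2_bracket (embv v) (embv w)) =
  [ffun q => (l + u) ^+ k * N2_bracket (embv v) (embv w) q].
Proof.
move=> hv hw; set b := N2_bracket _ _; elim: k => [|k IH].
  by apply/ffunP => q; rewrite [in RHS]ffunE expr0 mul1r.
rewrite iterS IH hD.2.1 (br_D hv hw) -/b; apply/ffunP => q.
by rewrite !ffunE mulrA -exprSr.
Qed.

Lemma eig_pow (v : 'rV[K]_g) l k : v *m Amx = l *: v -> v *m Amx ^+ k = l ^+ k *: v.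
Proof.
move=> hv; elim: k => [|k IH]; first by rewrite expr0 mulmx1 scale1r.
by rewrite exprSr mulmxA IH -scalemxAl hv scalerA -exprSr.
Qed.

Lemma bracket_nz (v w : 'rV[K]_g) : v != 0 -> (forall c, w != c *: v) ->
  exists p, N2_bracket (embv v) (embv w) (inr p) != 0.
Proof.
move=> v0 hw.
case: (boolP [exists p, N2_bracket (embv v) (embv w) (inr p) != 0]) => [/existsP //|].
rewrite negb_exists => /forallP h.
have E : forall a b : 'I_g, v 0 a * w 0 b = v 0 b * w 0 a.
  move=> a b; case: (ltngtP a b) => [ab|ba|/val_inj -> //].
    have := h (exist _ (a, b) ab); rewrite negbK ffunE /= !ffunE subr_eq0.
    by move/eqP.
  have := h (exist _ (b, a) ba); rewrite negbK ffunE /= !ffunE subr_eq0.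
  by move/eqP; rewrite mulrC [v 0 a * _]mulrC => ->.
case: (boolP [exists k, v 0 k != 0]) => [/existsP[k hk]|]; last first.
  rewrite negb_exists => /forallP hv0; case/negP: v0; apply/eqP/rowP => j; rewrite mxE; apply/eqP.
  by have := hv0 j; rewrite negbK.
case/negP: (hw (w 0 k / v 0 k)); apply/eqP/rowP => b; rewrite mxE.
by apply: (mulfI hk); rewrite E; field.
Qed.

Lemma no_periodic : (3 < g)%N -> is_periodic D -> False.
Proof.
move=> g3 [m [m1 hm]].
have Am := Apow hm.
have minp : mxminpoly Amx %| 'X^m - 1.
  by apply: mxminpoly_min; rewrite rmorphB /= rmorphXn /= horner_mx_X rmorph1 Am subrr.
have [rs ers] := closed_field_poly_normal ('X^m - 1 : {poly K}).
have mon := monicXnsubC (1 : K) m1; rewrite polyC1 in mon; move: mon.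
move/monicP => lc; rewrite lc scale1r in ers.
have sep : separable_poly ('X^m - 1 : {poly K}).
  rewrite unlock derivB derivXn derivC subr0.
  apply/Bezout_coprimepP; exists (-1, (m%:R^-1) *: 'X) => /=.
  have mK : (m%:R : K) != 0 by rewrite pnatr_eq0 -lt0n.
  rewrite -scalerAl mulrnAr -exprS prednK // -scaler_nat scalerA mulVf // scale1r.
  rewrite (_ : _ + _ = 1) ?eqpxx //; ring.
have uq : uniq rs by rewrite -separable_prod_XsubC -ers.
have [P Pu sd] : exists2 P, P \in unitmx & similar_diag P Amx.
  by apply/diagonalizableP; exists rs; rewrite // -ers.
have [d sPd] := similar_diagPex sd.
have PA := similarP Pu sPd.
have eig i : row i P *m Amx = d 0 i *: row i P.
  by rewrite -row_mul PA row_mul row_diag_mx -scalemxAl -rowE.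
have inj (x : 'rV[K]_g) : x *m P = 0 -> x = 0.
  by move=> h; rewrite -(mulmxK Pu x) h mul0mx.
have nz i : row i P != 0.
  apply/eqP; rewrite rowE => /inj /rowP /(_ i); rewrite !mxE !eqxx /= => /eqP.
  by rewrite oner_eq0.
have np i j : i != j -> forall c, row j P != c *: row i P.
  move=> ij c; apply/eqP => e.
  have := inj (delta_mx 0 j - c *: delta_mx 0 i).
  rewrite mulmxBl -scalemxAl -!rowE e subrr => /(_ erefl) /rowP /(_ j).
  rewrite !mxE !eqxx /= eq_sym (negbTE ij) /= mulr0 subr0 => /eqP.
  by rewrite oner_eq0.
have lam_pow i : d 0 i ^+ m = 1.
  have := eig_pow m (eig i); rewrite Am mulmx1 => h.
  apply/eqP; rewrite -subr_eq0; apply/eqP.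
  have : (d 0 i ^+ m - 1) *: row i P = 0 by rewrite scalerBl scale1r -h subrr.
  by move/eqP; rewrite scaler_eq0 (negbTE (nz i)) orbF => /eqP.
have lam_nz i : d 0 i != 0.
  apply/eqP => e; have := lam_pow i; rewrite e expr0n eqn0Ngt m1 /= => /eqP.
  by rewrite eq_sym oner_eq0.
have Qij i j : i != j -> Q (d 0 i) (d 0 j) = 0.
  move=> ij; apply: (cube_rel m1 (lam_pow i) (lam_pow j)).
  have [p hp] := bracket_nz (nz i) (np i j ij).
  have h0 := br_iter m (eig i) (eig j); rewrite hm in h0.
  have := congr1 (fun f : N2 K g => f (inr p)) h0; rewrite /= [in RHS]ffunE => h.
  by apply: (mulIf hp); rewrite mul1r -h.
pose i0 : 'I_g := inord 0; pose i1 : 'I_g := inord 1.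
pose i2 : 'I_g := inord 2; pose i3 : 'I_g := inord 3.
have ne a b : (a < g)%N -> (b < g)%N -> a != b -> (inord a : 'I_g) != inord b.
  move=> ha hb ab; apply/eqP => /(congr1 val); rewrite /= !inordK //.
  by apply/eqP.
have h0 : (0 < g)%N by [].
have h1 : (1 < g)%N by apply: leq_trans g3.
have h2 : (2 < g)%N by apply: leq_trans g3.
apply: (@four_false _ (d 0 i0) (d 0 i1) (d 0 i2) (d 0 i3) (lam_nz _) (lam_nz _));
  apply: Qij; exact: ne.
Qed.

End Der.


Theorem proposition2p14 (R : realType) (g : nat) (hg : (1 <= g)%N) :
  (exists D : N2 R[i] g -> N2 R[i] g, is_derivation D /\ is_periodic D)
  <-> (g <= 3)%N.
Proof.
split.
- move=> [D [hD hP]]; case: g hg D hD hP => [//|n] _ D hD hP.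
  rewrite leqNgt; apply/negP => g3; exact: (no_periodic hD g3 hP).
- move=> hg3; have [w hw] := @omega_ex (R[i]).
  exists (@Dc _ g w); split; first exact: Dc_der.
  exact: (@Dc_per _ g hg3 w hw).
Qed.
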